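(* Let $p$ be a prime with $p\neq 3$, and let $C(x,y,z)=ax^3+by^3+cz^3$ with $a,b,c$ integers such that $p\nmid abc$. Then $R(C)$ is dense in $\mathbb{Q}_p$.
   Context: For an integral form $F$ in $r$ variables, $R(F)=\{F(\overline{x})/F(\overline{y}):\overline{x},\overline{y}\in\mathbb{Z}^r,\ F(\overline{y})\neq 0\}$, viewed as a subset of the field $\mathbb{Q}_p$ of $p$-adic numbers with its $p$-adic topology. *)

(* Defs.v *)
From mathcomp Require Import all_boot all_order all_algebra.
Set Implicit Arguments. Unset Strict Implicit. Unset Printing Implicit Defensive.
Import Order.TTheory GRing.Theory Num.Theory.
Local Open Scope ring_scope.

Definition padic_val (p : nat) (x : rat) : int :=
  (logn p `|numq x|%N)%:Z - (logn p `|denq x|%N)%:Z.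

Definition padic_abs (p : nat) (x : rat) : rat :=
  if x == 0 then 0 else (p%:R : rat) ^ (- padic_val p x).

Definition diag_cubic (a b c : int) (x y z : int) : int :=
  a * x ^+ 3 + b * y ^+ 3 + c * z ^+ 3.

Definition ratio_set (F : int -> int -> int -> int) (r : rat) : Prop :=
  exists x1 x2 x3 y1 y2 y3 : int,
    F y1 y2 y3 != 0 /\ r = (F x1 x2 x3)%:~R / (F y1 y2 y3)%:~R.

(* S subset of Q is dense in Q_p.  Since Q is dense in Q_p, this is
   equivalent to: every rational is a p-adic limit of elements of S. *)
Definition dense_in_Qp (p : nat) (S : rat -> Prop) : Prop :=
  forall (q eps : rat), 0 < eps -> exists r, S r /\ padic_abs p (r - q) < eps.

(* Main.v *)
Require Import Defs.
From mathcomp Require Import all_boot all_order all_algebra all_solvable all_field.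
From mathcomp Require Import zify ring lra.
From Stdlib Require Import Classical.
Set Implicit Arguments. Unset Strict Implicit. Unset Printing Implicit Defensive.
Import Order.TTheory GRing.Theory Num.Theory.
Local Open Scope ring_scope.

Lemma Fp_fermat p (pp : prime p) (x : 'F_p) : x ^+ p = x.
Proof. have := expf_card x. by rewrite card_Fp. Qed.

Lemma Fp_fermat1 p (pp : prime p) (x : 'F_p) : x != 0 -> x ^+ p.-1 = 1.
Proof.
move=> x0; apply: (mulfI x0); rewrite mulr1 -exprS prednK ?prime_gt0 //.
exact: Fp_fermat.
Qed.

Lemma Fp_prim_root p (pp : prime p) : exists g : 'F_p, p.-1.-primitive_root g.
Proof.
have n0 : (0 < p.-1)%N by have := prime_gt1 pp; lia.
have [|||g _ hg] := hasP (@has_prim_root _ p.-1 (enum (predC1 (0 : 'F_p))) n0 _ _ _).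
- apply/allP => x; rewrite mem_enum /= => x0.
  by rewrite unity_rootE Fp_fermat1.
- exact: enum_uniq.
- by rewrite -cardE cardC1 card_Fp.
by exists g.
Qed.

Lemma growth p (pp : prime p) (T : 'F_p -> Prop) (d w : 'F_p) :
  T 0 -> ~ T w -> d != 0 -> exists t, T t /\ ~ T (t + d).
Proof.
move=> T0 Tw d0; apply: NNPP => H.
have step : forall t, T t -> T (t + d).
  by move=> t Tt; apply: NNPP => nT; apply: H; exists t.
have all_m : forall m : nat, T (m%:R * d).
  elim=> [|m IH]; first by rewrite mul0r.
  by rewrite mulrSr mulrDl mul1r; apply: step.
apply: Tw; have := all_m (nat_of_ord (w / d : 'F_p)); rewrite natr_Zp divfK //.
Qed.

Section Classes.
Variables (p : nat) (g : 'F_p).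
Hypotheses (pp : prime p) (p13 : (p %% 3 = 1)%N) (gprim : p.-1.-primitive_root g).

Definition dlog (x : 'F_p) : nat := oapp val 0%N [pick i : 'I_p.-1 | g ^+ i == x].

Lemma dlogP x : x != 0 -> g ^+ dlog x = x.
Proof.
move=> x0; rewrite /dlog; case: pickP => [i /eqP //|H].
have [i hi] := prim_rootP gprim (Fp_fermat1 pp x0).
by have := H i; rewrite hi eqxx.
Qed.

Lemma dvd3n : (3 %| p.-1)%N.
Proof. move: p13; case: (p) => // q /=; rewrite /dvdn => h; apply/eqP. lia. Qed.

Lemma g_neq0 : g != 0.
Proof.
apply/eqP => g0; have := prim_expr_order gprim; rewrite g0 expr0n.
move: (prim_order_gt0 gprim); case: (p.-1) => [//|k] _ /=.
by move=> /eqP; rewrite eq_sym oner_eq0.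
Qed.

Lemma expg_mod i j : g ^+ i = g ^+ j -> (i %% 3 = j %% 3)%N.
Proof.
move/eqP; rewrite (eq_prim_root_expr gprim) => /eqP h.
by rewrite -(modn_dvdm i dvd3n) h modn_dvdm // dvd3n.
Qed.

Definition cls x := (dlog x %% 3)%N.

Lemma cls_exp i : cls (g ^+ i) = (i %% 3)%N.
Proof. apply: expg_mod; rewrite dlogP // expf_neq0 //; exact: g_neq0. Qed.

Lemma cls_lt x : (cls x < 3)%N.
Proof. by rewrite /cls ltn_mod. Qed.

Lemma clsM x y : x != 0 -> y != 0 -> cls (x * y) = ((cls x + cls y) %% 3)%N.
Proof.
move=> x0 y0; rewrite -{1}(dlogP x0) -{1}(dlogP y0) -exprD cls_exp.
by rewrite /cls modnDm.
Qed.

Lemma cls_cube y : y != 0 -> cls (y ^+ 3) = 0%N.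
Proof. by move=> y0; rewrite -(dlogP y0) -exprM cls_exp modnMl. Qed.

Lemma cube_cls x : x != 0 -> cls x = 0%N -> exists y, x = y ^+ 3.
Proof.
move=> x0 /eqP c0; exists (g ^+ (dlog x %/ 3)); rewrite -exprM divnK //.
by rewrite dlogP.
Qed.

Lemma cls1 : cls 1 = 0%N.
Proof. by rewrite -(expr1n _ 3) cls_cube ?oner_neq0. Qed.

Lemma clsN1 : cls (-1) = 0%N.
Proof.
have -> : (-1 : 'F_p) = (-1) ^+ 3 by rewrite -signr_odd.
by rewrite cls_cube // oppr_eq0 oner_neq0.
Qed.

Lemma clsV x : x != 0 -> cls x^-1 = ((3 - cls x) %% 3)%N.
Proof.
move=> x0; have := clsM x0 (invr_neq0 x0); rewrite mulfV // cls1.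
have := cls_lt x; have := cls_lt x^-1; lia.
Qed.

Lemma clsN x : x != 0 -> cls (- x) = cls x.
Proof.
move=> x0; rewrite -mulN1r clsM ?oppr_eq0 ?oner_neq0 // clsN1 add0n.
by rewrite /cls modn_mod.
Qed.

Lemma cls_g : cls g = 1%N.
Proof. by rewrite -(expr1 g) cls_exp. Qed.


Lemma cls_one_plus t : t != 0 -> cls t = 1%N -> 1 + t != 0.
Proof.
move=> t0 ct; apply/eqP => h; have : t = -1 by apply/eqP; rewrite -addr_eq0 addrC h.
by move=> e; move: ct; rewrite e clsN1.
Qed.

Lemma cyc12 : exists t, [/\ t != 0, 1 + t != 0, cls t = 1%N & cls (1 + t) = 2%N].
Proof.
apply: NNPP => H.
have H' : forall t, t != 0 -> cls t = 1%N -> cls (1 + t) != 2%N.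
  move=> t t0 ct; apply/eqP => c2; apply: H; exists t; split => //.
  exact: cls_one_plus.
pose C0 := [set x : 'F_p | (x != 0) && (cls x == 0%N)].
pose C1 := [set x : 'F_p | (x != 0) && (cls x == 1%N)].
have h1 : (#|C0| <= #|C1|)%N.
  rewrite -(card_imset C0 (mulfI g_neq0)) subset_leq_card //.
  apply/subsetP => y /imsetP [x]; rewrite inE => /andP [x0 /eqP cx] ->.
  by rewrite inE mulf_neq0 ?g_neq0 //= clsM ?g_neq0 // cls_g cx.
pose phi t := if cls (1 + t) == 0%N then -1 - t else -1 - t^-1.
have key : forall t, t \in C1 -> phi t \in C0 :\ -1.
  move=> t; rewrite inE => /andP [t0 /eqP ct].
  have t1 := cls_one_plus t0 ct.
  have c2 := H' t t0 ct; have c3 := cls_lt (1 + t).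
  rewrite /phi; have [c0|c0] := eqVneq (cls (1 + t)) 0%N.
    rewrite !inE -opprD oppr_eq0 t1 clsN // c0 eqxx andbT eqr_opp.
    by rewrite andbT -{2}(addr0 1) (inj_eq (addrI 1)).
  have c1 : cls (1 + t) = 1%N by move: c0 c3 c2; set k := cls (1 + t); lia.
  have e : -1 - t^-1 = - ((1 + t) * t^-1) by rewrite mulrDl mulfV // mul1r opprD addrC.
  rewrite !inE e oppr_eq0 mulf_neq0 ?invr_neq0 //= clsN ?mulf_neq0 ?invr_neq0 //.
  rewrite clsM ?invr_neq0 // clsV // ct c1 /= andbT -e.
  by rewrite -{2}(addr0 (-1)) (inj_eq (addrI (-1))) oppr_eq0 invr_eq0.
have inj : {in C1 &, injective phi}.
  move=> t1 t2; rewrite !inE => /andP [t10 /eqP c1] /andP [t20 /eqP c2].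
  rewrite /phi; case: eqP => _; case: eqP => _.
  - by move/(addrI (-1))/oppr_inj.
  - move/(addrI (-1))/oppr_inj => e; move: c1; rewrite e clsV // c2 //.
  - move/(addrI (-1))/oppr_inj => e; move: c2; rewrite -e clsV // c1 //.
  - by move/(addrI (-1))/oppr_inj/invr_inj.
have m1 : -1 \in C0 by rewrite inE oppr_eq0 oner_neq0 clsN1.
have h2 : (#|C1| <= #|C0 :\ (-1)%R|)%N.
  rewrite -(card_in_imset inj) subset_leq_card //.
  by apply/subsetP => y /imsetP [x /key hx ->].
move: h1 h2; rewrite (cardsD1 (-1)%R C0) m1 /=; move=> h1a h2a; have := leq_trans h1a h2a; by rewrite add1n ltnn.
Qed.


Lemma same_cls_cube u v : u != 0 -> v != 0 -> cls u = cls v -> exists y, u = v * y ^+ 3.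
Proof.
move=> u0 v0 e.
have q0 : u / v != 0 by rewrite mulf_neq0 ?invr_neq0.
have [y hy] : exists y, u / v = y ^+ 3.
  apply: cube_cls => //; rewrite clsM ?invr_neq0 // clsV // e.
  have := cls_lt v; set k := cls v; lia.
by exists y; rewrite -hy mulrC divfK.
Qed.

Lemma reach (a b c N v : 'F_p) : N != 0 -> v != 0 -> cls v = cls N ->
  (exists x y z, v = a * x ^+ 3 + b * y ^+ 3 + c * z ^+ 3) ->
  exists x y z, N = a * x ^+ 3 + b * y ^+ 3 + c * z ^+ 3.
Proof.
move=> N0 v0 e [x [y [z hv]]].
have [h hh] := same_cls_cube N0 v0 (esym e).
exists (h * x), (h * y), (h * z); rewrite hh hv; ring.
Qed.

Lemma surj1 (a b c N : 'F_p) : a != 0 -> b != 0 -> c != 0 -> N != 0 ->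
  exists x y z, N = a * x ^+ 3 + b * y ^+ 3 + c * z ^+ 3.
Proof.
move=> a0 b0 c0 N0.
pose T1 v := exists x, v = a * x ^+ 3.
have [t1 [[x1 ->] nT1]] : exists t, T1 t /\ ~ T1 (t + b).
  apply: (growth pp (w := a * g)) => //.
    by exists 0; rewrite expr0n mulr0.
  move=> [x hx]; have gx : g = x ^+ 3 by apply: (mulfI a0).
  have x0 : x != 0 by apply/eqP => e; move: g_neq0; rewrite gx e expr0n eqxx.
  by have := cls_cube x0; rewrite -gx cls_g.
set s2 := a * x1 ^+ 3 + b in nT1.
have s20 : s2 != 0 by apply/eqP => e; apply: nT1; rewrite e; exists 0; rewrite expr0n mulr0.
have cs2 : cls s2 != cls a.
  apply/eqP => e; have [y hy] := same_cls_cube s20 a0 e; apply: nT1; by exists y.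
pose al := cls a; pose be := cls s2.
pose T2 v := v = 0 \/ (v != 0 /\ (cls v = al \/ cls v = be)).
have hal := cls_lt a; have hbe := cls_lt s2.
have [t2 [T2t nT2]] : exists t, T2 t /\ ~ T2 (t + c).
  apply: (growth pp (w := g ^+ (3 - (al + be)))) => //; first by left.
  case=> [/eqP|[_]]; first by rewrite expf_eq0 (negbTE g_neq0) andbF.
  rewrite cls_exp; move: cs2; rewrite -/al -/be; lia.
set s3 := t2 + c in nT2.
have s30 : s3 != 0 by apply/eqP => e; apply: nT2; left.
have cs3 : cls s3 != al /\ cls s3 != be.
  by split; apply/eqP => e; apply: nT2; right; split => //; [left|right].
have Vs3 : exists x y z, s3 = a * x ^+ 3 + b * y ^+ 3 + c * z ^+ 3.
  rewrite /s3; case: T2t => [e|[t20 [e|e]]].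
  - by exists 0, 0, 1; rewrite e !expr0n expr1n /=; ring.
  - have [y hy] := same_cls_cube t20 a0 e.
    by exists y, 0, 1; rewrite hy expr0n expr1n /=; ring.
  - have [y hy] := same_cls_cube t20 s20 e.
    by exists (x1 * y), y, 1; rewrite hy /s2 expr1n; ring.
have hN := cls_lt N; have h3 := cls_lt s3.
have : cls N = al \/ cls N = be \/ cls N = cls s3.
  move: cs2 cs3; rewrite -/al -/be; set k := cls N; set l := cls s3; lia.
case=> [e|[e|e]].
- apply: (reach N0 a0) => //; by exists 1, 0, 0; ring.
- apply: (reach N0 s20) => //; by exists x1, 1, 0; rewrite /s2; ring.
- exact: (reach N0 s30).
Qed.

Lemma cyc21 : exists t, [/\ t != 0, 1 + t != 0, cls t = 2%N & cls (1 + t) = 1%N].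
Proof.
have [t [t0 t1 c1 c2]] := cyc12.
exists (- (1 + t)); split.
- by rewrite oppr_eq0.
- have -> : 1 + - (1 + t) = - t by ring.
  by rewrite oppr_eq0.
- by rewrite clsN.
- have -> : 1 + - (1 + t) = - t by ring.
  by rewrite clsN.
Qed.

Lemma zero1 (a b c : 'F_p) : a != 0 -> b != 0 -> c != 0 ->
  exists x y z, a * x ^+ 3 + b * y ^+ 3 + c * z ^+ 3 = 0 /\ [\/ x != 0, y != 0 | z != 0].
Proof.
move=> a0 b0 c0.
have pair : forall u v, u != 0 -> v != 0 -> cls u = cls v -> exists x, u * x ^+ 3 + v = 0.
  move=> u v u0 v0 e.
  have [x hx] := same_cls_cube (v := u) (u := - v) ltac:(by rewrite oppr_eq0) u0 ltac:(by rewrite clsN).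
  by exists x; rewrite -hx addNr.
have ha := cls_lt a; have hb := cls_lt b; have hc := cls_lt c.
have [eab|nab] := eqVneq (cls a) (cls b).
  have [x hx] := pair a b a0 b0 eab.
  exists x, 1, 0; split; last by apply: Or32; exact: oner_neq0.
  by apply: etrans _ hx; ring.
have [eac|nac] := eqVneq (cls a) (cls c).
  have [x hx] := pair a c a0 c0 eac.
  exists x, 0, 1; split; last by apply: Or33; exact: oner_neq0.
  by apply: etrans _ hx; ring.
have [ebc|nbc] := eqVneq (cls b) (cls c).
  have [y hy] := pair b c b0 c0 ebc.
  exists 0, y, 1; split; last by apply: Or33; exact: oner_neq0.
  by apply: etrans _ hy; ring.
pose i := ((cls b + 3 - cls a) %% 3)%N; pose j := ((cls c + 3 - cls a) %% 3)%N.
have [t [t0 t10 ct ct1]] : exists t, [/\ t != 0, 1 + t != 0, cls t = i & cls (1 + t) = j].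
  have : (i = 1 /\ j = 2 \/ i = 2 /\ j = 1)%N.
    move: nab nac nbc ha hb hc; rewrite /i /j.
    set A := cls a; set B := cls b; set C := cls c; lia.
  by case=> [[-> ->]|[-> ->]]; [exact: cyc12 | exact: cyc21].
have [y hy] : exists y, t * a = b * y ^+ 3.
  apply: same_cls_cube => //; first by rewrite mulf_neq0.
  rewrite clsM // ct /i; move: ha hb; set A := cls a; set B := cls b; lia.
have [z hz] : exists z, - ((1 + t) * a) = c * z ^+ 3.
  apply: same_cls_cube => //; first by rewrite oppr_eq0 mulf_neq0.
  rewrite clsN ?mulf_neq0 // clsM // ct1 /j; move: ha hc; set A := cls a; set C := cls c; lia.
exists 1, y, z; split; last by apply: Or31; exact: oner_neq0.
by rewrite -hy -hz; ring.
Qed.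

End Classes.

Lemma cube_root_2 p (pp : prime p) (h : (p %% 3 = 2)%N) (w : 'F_p) : exists x, w = x ^+ 3.
Proof.
have d3 : (3 %| (p + p.-1))%N by move: h; case: (p) pp => // q _ /=; rewrite /dvdn => h; apply/eqP; lia.
exists (w ^+ ((p + p.-1) %/ 3)); rewrite -exprM divnK // exprD Fp_fermat //.
by rewrite -exprS prednK ?prime_gt0 // Fp_fermat.
Qed.

Lemma MP p (pp : prime p) (p3 : p != 3%N) (a b c N : 'F_p) :
  a != 0 -> b != 0 -> c != 0 ->
  exists x y z, a * x ^+ 3 + b * y ^+ 3 + c * z ^+ 3 = N /\ [\/ x != 0, y != 0 | z != 0].
Proof.
move=> a0 b0 c0.
have : (p %% 3 = 1 \/ p %% 3 = 2)%N.
  have : ~~ (3 %| p)%N by rewrite dvdn_prime2 // eq_sym.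
  rewrite /dvdn; lia.
case=> h.
  have [g hg] := Fp_prim_root pp.
  have [->|N0] := eqVneq N 0; first exact: (zero1 pp h hg a0 b0 c0).
  have [x [y [z e]]] := surj1 pp h hg a0 b0 c0 N0.
  exists x, y, z; split => //.
  have [x0|] := eqVneq x 0; last by constructor 1.
  have [y0|] := eqVneq y 0; last by constructor 2.
  have [z0|] := eqVneq z 0; last by constructor 3.
  by move: N0; rewrite e x0 y0 z0 !expr0n !mulr0 !addr0 eqxx.
have [->|N0] := eqVneq N 0.
  have [x hx] := cube_root_2 pp h (- b / a).
  exists x, 1, 0; split; last by constructor 2; exact: oner_neq0.
  by rewrite -hx mulrC divfK // expr1n mulr1 expr0n mulr0 addr0 addNr.
have [x hx] := cube_root_2 pp h (N / a).
exists x, 0, 0; split.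
  by rewrite -hx mulrC divfK // expr0n !mulr0 !addr0.
constructor 1; apply/eqP => x0; move: hx; rewrite x0 expr0n /= => /eqP.
by rewrite mulf_eq0 invr_eq0 (negbTE N0) (negbTE a0).
Qed.

Lemma intrX3 (R : pzRingType) (z : int) (n : nat) : ((z ^+ n)%:~R : R) = z%:~R ^+ n.
Proof. elim: n => [|n IH]; first by rewrite !expr0. by rewrite !exprS intrM IH. Qed.

Lemma MPZ p (pp : prime p) (p3 : p != 3%N) (A B C N : int) :
  ~~ (p%:Z %| A * B * C)%Z ->
  exists X Y Z : int, (p%:Z %| diag_cubic A B C X Y Z - N)%Z /\
    [\/ ~~ (p%:Z %| X)%Z, ~~ (p%:Z %| Y)%Z | ~~ (p%:Z %| Z)%Z].
Proof.
move=> hABC.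
have ch := pchar_Fp pp.
have E : forall z : int, (p%:Z %| z)%Z = ((z%:~R : 'F_p) == 0) by move=> z; rewrite (dvdz_pcharf ch).
have a0 : (A%:~R : 'F_p) != 0 by rewrite -E; apply: contra hABC => h; rewrite dvdz_mulr // dvdz_mulr.
have b0 : (B%:~R : 'F_p) != 0 by rewrite -E; apply: contra hABC => h; rewrite dvdz_mulr // dvdz_mull.
have c0 : (C%:~R : 'F_p) != 0 by rewrite -E; apply: contra hABC => h; rewrite dvdz_mull.
have [x [y [z [e nz]]]] := MP pp p3 (N%:~R) a0 b0 c0.
have I : forall u : 'F_p, (((nat_of_ord u)%:Z)%:~R : 'F_p) = u by move=> u; exact: natr_Zp.
exists (nat_of_ord x)%:Z, (nat_of_ord y)%:Z, (nat_of_ord z)%:Z; split.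
  rewrite E /diag_cubic intrB !intrD !intrM !I -e; apply/eqP; ring.
by rewrite !E !I.
Qed.

Lemma coprimez_primeE p (pp : prime p) (w : int) : coprimez p%:Z w = ~~ (p%:Z %| w)%Z.
Proof. by rewrite coprimezE dvdzE /= prime_coprime. Qed.

Lemma hensel p (pp : prime p) (p3 : p != 3%N) (A L X0 : int) :
  ~~ (p%:Z %| A)%Z -> ~~ (p%:Z %| X0)%Z -> (p%:Z %| A * X0 ^+ 3 + L)%Z ->
  forall M, exists X, (p%:Z ^+ M %| A * X ^+ 3 + L)%Z.
Proof.
move=> pA pX0 h0.
suff H : forall M, exists X, (p%:Z %| X - X0)%Z /\ (p%:Z ^+ M.+1 %| A * X ^+ 3 + L)%Z.
  move=> M; have [X [_ hX]] := H M; exists X.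
  by apply: dvdz_trans hX; apply: dvdz_exp2l.
elim=> [|M [X [hX0 hX]]]; first by exists X0; rewrite subrr dvdz0 expr1.
have pX : ~~ (p%:Z %| X)%Z.
  apply: contra pX0 => pX.
  by have := rpredB pX hX0; rewrite opprB addrCA subrr addr0.
set D := 3%:Z * A * X ^+ 2.
have cD : coprimez p%:Z D.
  rewrite /D !coprimezMr !coprimez_primeE // pA pX !andbT.
  by rewrite dvdzE /= dvdn_prime2 //.
have [u [v huv]] := Bezoutz p%:Z D.
move: huv; rewrite (eqP cD) => huv.
have [m hm] := dvdzP hX.
set P := p%:Z ^+ M.+1 in hm.
pose s := - m * v.
exists (X + P * s); split.
  rewrite addrAC rpredD // /P exprS -mulrA dvdz_mulr //.
have hL : L = m * P - A * X ^+ 3 by rewrite -hm addrAC subrr add0r.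
have e1 : A * (X + P * s) ^+ 3 + L =
   P * (m * (1 - v * D)) + P * P * (3%:Z * A * X * s ^+ 2 + A * P * s ^+ 3).
  by rewrite hL /s /D; ring.
have e2 : 1 - v * D = u * p%:Z by rewrite -huv; ring.
rewrite e1 e2 rpredD //.
  have -> : P * (m * (u * p%:Z)) = p%:Z ^+ M.+2 * (m * u) by rewrite /P [in RHS]exprS; ring.
  by apply: dvdz_mulr; apply: dvdzz.
rewrite dvdz_mulr // /P -exprD dvdz_exp2l //; lia.
Qed.

Lemma val_frac p (U V : int) : U != 0 -> V != 0 ->
  padic_val p (U%:~R / V%:~R) = (logn p `|U|)%:Z - (logn p `|V|)%:Z.
Proof.
move=> U0 V0; rewrite /padic_val; set x := U%:~R / V%:~R.
have x0 : x != 0 by rewrite mulf_neq0 ?invr_eq0 ?intr_eq0.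
have e : U * denq x = numq x * V.
  apply: (@intr_inj rat); rewrite !intrM; apply/eqP.
  by rewrite -eqr_div ?intr_eq0 ?denq_neq0 // divq_num_den.
have : `|(U * denq x)%R|%N = `|(numq x * V)%R|%N by rewrite e.
rewrite !abszM => e2.
have := congr1 (logn p) e2; rewrite !lognM ?absz_gt0 ?denq_neq0 ?numq_eq0 //.
lia.
Qed.

Lemma values p (pp : prime p) (p3 : p != 3%N) (A B C N : int) (M : nat) :
  ~~ (p%:Z %| A * B * C)%Z ->
  exists X Y Z : int, (p%:Z ^+ M %| diag_cubic A B C X Y Z - N)%Z.
Proof.
move=> hABC.
have pA : ~~ (p%:Z %| A)%Z by apply: contra hABC => h; rewrite dvdz_mulr // dvdz_mulr.
have pB : ~~ (p%:Z %| B)%Z by apply: contra hABC => h; rewrite dvdz_mulr // dvdz_mull.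
have pC : ~~ (p%:Z %| C)%Z by apply: contra hABC => h; rewrite dvdz_mull.
have [X [Y [Z [h0 [hX|hY|hZ]]]]] := MPZ pp p3 N hABC.
- have [X' hX'] := hensel pp p3 (L := B * Y ^+ 3 + C * Z ^+ 3 - N) pA hX
    ltac:(by move: h0; rewrite /diag_cubic !addrA) M.
  by exists X', Y, Z; move: hX'; rewrite /diag_cubic !addrA.
- have [Y' hY'] := hensel pp p3 (L := A * X ^+ 3 + C * Z ^+ 3 - N) pB hY
    ltac:(by move: h0; rewrite /diag_cubic; congr (_ %| _)%Z; ring) M.
  exists X, Y', Z; move: hY'; rewrite /diag_cubic.
  by have -> : B * Y' ^+ 3 + (A * X ^+ 3 + C * Z ^+ 3 - N) = A * X ^+ 3 + B * Y' ^+ 3 + C * Z ^+ 3 - N by ring.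
- have [Z' hZ'] := hensel pp p3 (L := A * X ^+ 3 + B * Y ^+ 3 - N) pC hZ
    ltac:(by move: h0; rewrite /diag_cubic; congr (_ %| _)%Z; ring) M.
  exists X, Y, Z'; move: hZ'; rewrite /diag_cubic.
  by have -> : C * Z' ^+ 3 + (A * X ^+ 3 + B * Y ^+ 3 - N) = A * X ^+ 3 + B * Y ^+ 3 + C * Z' ^+ 3 - N by ring.
Qed.

Theorem theorem1p5 (p : nat) (a b c : int) :
  prime p -> p != 3%N -> ~~ ((p%:Z) %| a * b * c)%Z ->
  dense_in_Qp p (ratio_set (diag_cubic a b c)).
Proof.
move=> pp p3 habc q eps eps0.
have pa : ~~ (p%:Z %| a)%Z by apply: contra habc => h; rewrite dvdz_mulr // dvdz_mulr.
have a0 : a != 0 by apply: contraNneq pa => ->; rewrite dvdz0.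
have d0 : denq q != 0 := denq_neq0 q.
pose e := logn p `|denq q|.
pose L := Num.Def.archi_bound (eps^-1).
have hL : eps^-1 < L%:R by apply: archi_boundP; rewrite invr_ge0 ltW.
pose M := (3 * e + L)%N.
have [X [Y [Z hXYZ]]] := values pp p3 (a * numq q * denq q ^+ 2) M habc.
have [k hk] := dvdzP hXYZ.
pose D := diag_cubic a b c (denq q) 0 0.
have hD : D = a * denq q ^+ 3 by rewrite /D /diag_cubic; ring.
have D0 : D != 0 by rewrite hD mulf_neq0 ?expf_neq0.
exists ((diag_cubic a b c X Y Z)%:~R / D%:~R); split.
  by exists X, Y, Z, (denq q), 0, 0; split.
have eq : (diag_cubic a b c X Y Z)%:~R / D%:~R - q
          = (k * p%:Z ^+ M)%:~R / (a * denq q ^+ 3)%:~R :> rat.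
  have ha : (a%:~R : rat) != 0 by rewrite intr_eq0.
  have hd : ((denq q)%:~R : rat) != 0 by rewrite intr_eq0.
  rewrite -hk hD intrB !intrM.
  move: (divq_num_den q) ha hd; set nq := numq q; set dq := denq q => hq ha hd.
  rewrite -hq.
  by field; rewrite ha hd.
rewrite /padic_abs eq.
have [->|k0] := eqVneq k 0; first by rewrite !mul0r eqxx.
have x0 : ((k * p%:Z ^+ M)%:~R / (a * denq q ^+ 3)%:~R : rat) != 0.
  by rewrite mulf_neq0 ?invr_eq0 ?intr_eq0 ?mulf_neq0 ?expf_neq0 // eqz_nat -lt0n prime_gt0.
rewrite (negbTE x0).
have la : logn p `|a| = 0%N.
  by apply: logn_coprime; rewrite prime_coprime //; move: pa; rewrite dvdzE.
have hv : padic_val p ((k * p%:Z ^+ M)%:~R / (a * denq q ^+ 3)%:~R) = (logn p `|k| + L)%N%:Z.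
  rewrite val_frac ?mulf_neq0 ?expf_neq0 //; last first.
    by rewrite eqz_nat -lt0n prime_gt0.
  rewrite !abszM !abszX /= !lognM ?muln_gt0 ?absz_gt0 ?expn_gt0 ?prime_gt0 ?d0 ?a0 ?k0 //.
  rewrite pfactorK // la /M /e; lia.
rewrite hv -exprnN invf_plt ?posrE ?exprn_gt0 ?ltr0n ?prime_gt0 //.
apply: (lt_le_trans hL); rewrite -natrX ler_nat.
apply: (leq_trans (ltnW (ltn_expl L (prime_gt1 pp)))).
by rewrite leq_pexp2l ?prime_gt0 // leq_addl.
Qed.
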